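(* For a probability distribution $\mu$ defined over a metric space $(\mathcal{X}, c)$ with a unit diameter and $\delta>0$, let $\tilde\mu$ be a probability distribution that differs from $\mu$ by a $\delta$ fraction of mass (i.e., $\|\mu-\tilde\mu\|_{TV}=\delta$) such that the $(1-\frac{\delta}{10})$-partial $p$-Wasserstein distance between $\mu$ and $\tilde\mu$ is at least $\frac{1}{2}W_p(\mu, \tilde\mu)$. Then, for any parameters $p\ge 1$ and $k>0$, \[ \mathrm{RPW}_{p,k}(\mu, \tilde{\mu}) = \Theta\left(\min\left\{\delta, \frac{1}{k}W_p(\mu, \tilde\mu) \right\}\right). \]
   Context: For $p\ge1$, $k\ge0$ and probability distributions $\mu,\nu$ on a metric space of unit diameter, $\mathrm{RPW}_{p,k}(\mu,\nu)=\inf\{\varepsilon\ge0 \mid W_{p,1-\varepsilon}(\mu,\nu)\le k\varepsilon\}$, where $W_{p,\alpha}$ denotes the $\alpha$-partial $p$-Wasserstein distance (minimum cost of a plan transporting $\alpha$ mass) and $W_p$ is the $p$-Wasserstein distance. *)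

(* Defs.v *)
From HB Require Import structures.
From mathcomp Require Import all_boot all_order all_algebra.
From mathcomp Require Import all_classical all_reals all_analysis.
Set Implicit Arguments. Unset Strict Implicit. Unset Printing Implicit Defensive.
Import Order.TTheory GRing.Theory Num.Theory.
Local Open Scope classical_set_scope.
Local Open Scope ring_scope.

Section Defs.
Context (d : measure_display) (T : measurableType d) (R : realType).

Definition unit_diam_metric (c : T -> T -> R) : Prop :=
  [/\ forall x y, 0 <= c x y, forall x y, c x y = 0 <-> x = y,
      forall x y, c x y = c y x,
      forall x y z, c x z <= c x y + c y z &
      forall x y, c x y <= 1].

Definition tv_dist (mu nu : probability T R) : R :=
  sup [set `|fine (mu A) - fine (nu A)| | A in measurable].

Definition plan_cost (c : T -> T -> R) (p : R)
    (pi : {measure set (T * T)%type -> \bar R}) : \bar R :=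
  (\int[pi]_z ((c z.1 z.2) `^ p)%:E)%E.

Definition is_coupling (mu nu : probability T R)
    (pi : {measure set (T * T)%type -> \bar R}) : Prop :=
  (forall A, measurable A -> pi (A `*` setT) = mu A) /\
  (forall B, measurable B -> pi (setT `*` B) = nu B).

Definition is_partial_plan (mu nu : probability T R) (alpha : R)
    (pi : {measure set (T * T)%type -> \bar R}) : Prop :=
  [/\ forall A, measurable A -> (pi (A `*` setT) <= mu A)%E,
      forall B, measurable B -> (pi (setT `*` B) <= nu B)%E &
      pi setT = alpha%:E].

Definition Wp (c : T -> T -> R) (p : R) (mu nu : probability T R) : R :=
  (fine (ereal_inf [set plan_cost c p pi | pi in is_coupling mu nu])) `^ p^-1.

Definition Wpa (c : T -> T -> R) (p alpha : R) (mu nu : probability T R) : R :=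
  (fine (ereal_inf [set plan_cost c p pi | pi in is_partial_plan mu nu alpha]))
    `^ p^-1.

Definition RPW (c : T -> T -> R) (p k : R) (mu nu : probability T R) : R :=
  inf [set eps : R | 0 <= eps <= 1 /\ Wpa c p (1 - eps) mu nu <= k * eps].

End Defs.

(* Main.v *)
Require Import Defs.
From HB Require Import structures.
From mathcomp Require Import all_boot all_order all_algebra.
From mathcomp Require Import all_classical all_reals all_analysis measurable_realfun.
From mathcomp Require Import lra.
Import Order.TTheory GRing.Theory Num.Theory.
Local Open Scope classical_set_scope.
Local Open Scope ring_scope.

Section Aux.
Context (R : realType) (d : measure_display) (T : measurableType d)
  (c : T -> T -> R) (mu mut : probability T R) (p : R).
Hypothesis hc : unit_diam_metric c.
Hypothesis mc : measurable_fun setT (fun z : (T * T)%type => c z.1 z.2).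
Hypothesis p1 : 1 <= p.

Let g (z : (T * T)%type) : \bar R := ((c z.1 z.2) `^ p)%:E.

Let mg : measurable_fun setT g.
Proof.
apply/measurable_EFinP.
exact: (measurableT_comp (measurable_powR p) mc).
Qed.

Let g_ge0 z : (0 <= g z)%E.
Proof. by rewrite lee_fin powR_ge0. Qed.

Let g_le1 z : (g z <= 1)%E.
Proof.
case: hc => c0 _ _ _ c1.
rewrite lee_fin; apply: (@le_trans _ _ (1 `^ p)); last by rewrite powR1.
apply: ge0_ler_powR => //; first by rewrite (le_trans _ p1).
by rewrite nnegrE.
by rewrite nnegrE.
Qed.

Lemma cost_ge0 pi : (0 <= plan_cost c p pi)%E.
Proof. by rewrite /plan_cost; apply: integral_ge0 => z _; exact: g_ge0. Qed.

Lemma cost_le pi : (plan_cost c p pi <= pi setT)%E.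
Proof.
rewrite /plan_cost.
apply: (@le_trans _ _ (\int[pi]_(z in setT) (cst 1%E) z)%E).
  apply: ge0_le_integral => //.
  - by move=> z _; exact: g_ge0.
  - by move=> z _; exact: g_le1.
by rewrite integral_cst// mul1e.
Qed.

Lemma cost_scale (r : {nonneg R}) pi :
  plan_cost c p (mscale r pi) = (r%:num%:E * plan_cost c p pi)%E.
Proof. by rewrite /plan_cost ge0_integral_mscale// => z _; exact: g_ge0. Qed.


Lemma scale_plan a b pi : 0 <= a -> a <= b -> 0 < b ->
  is_partial_plan mu mut b pi ->
  exists pi', is_partial_plan mu mut a pi' /\
    (plan_cost c p pi' <= plan_cost c p pi)%E.
Proof.
move=> a0 ab b0 [h1 h2 h3].
have hr : 0 <= a / b by rewrite divr_ge0// ltW.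
have r1 : a / b <= 1 by rewrite ler_pdivrMr// mul1r.
exists (mscale (NngNum hr) pi); split; last first.
  rewrite cost_scale; apply: gee_pMl => //=.
  all: try by rewrite lee_fin.
  all: try exact: cost_ge0.
split.
- move=> A mA; rewrite /mscale/=; apply: le_trans (h1 A mA).
  by apply: gee_pMl => //; rewrite lee_fin.
- move=> B mB; rewrite /mscale/=; apply: le_trans (h2 B mB).
  by apply: gee_pMl => //; rewrite lee_fin.
- change ((a / b)%:E * pi setT = a%:E)%E.
  by rewrite h3 -EFinM divfK// gt_eqF.
Qed.

Lemma coupling_plan pi : is_coupling mu mut pi -> is_partial_plan mu mut 1 pi.
Proof.
move=> [h1 h2]; split.
- by move=> A mA; rewrite h1.
- by move=> B mB; rewrite h2.
- by rewrite -setXTT h1// probability_setT.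
Qed.

Lemma coupling_exists : is_coupling mu mut (mu \x mut)%E.
Proof.
split.
- move=> A mA; have := product_measure1E mu mut mA measurableT.
  move=> h; apply: (eq_trans h); transitivity (mu A * 1)%E; last exact: mule1.
  by congr (_ * _)%E; exact: probability_setT.
- move=> B mB; have := product_measure1E mu mut measurableT mB.
  move=> h; apply: (eq_trans h); transitivity (1 * mut B)%E; last exact: mul1e.
  by congr (_ * _)%E; exact: probability_setT.
Qed.

Definition Fa a := ereal_inf [set plan_cost c p pi | pi in is_partial_plan mu mut a].
Definition Gc := ereal_inf [set plan_cost c p pi | pi in is_coupling mu mut].

Lemma Fa_ge0 a : (0 <= Fa a)%E.
Proof. by apply/ereal_infP => _ [pi _ <-]; exact: cost_ge0. Qed.

Lemma Gc_ge0 : (0 <= Gc)%E.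
Proof. by apply/ereal_infP => _ [pi _ <-]; exact: cost_ge0. Qed.

Lemma Fa_le_Gc a : 0 <= a <= 1 -> (Fa a <= Gc)%E.
Proof.
move=> /andP[a0 a1]; apply/ereal_infP => _ [pi hpi <-].
have [pi' [hpi' le']] := scale_plan a 1 pi a0 a1 ltr01 (coupling_plan pi hpi).
apply: le_trans le'; apply: ereal_inf_lbound; by exists pi'.
Qed.

Lemma Gc_le1 : (Gc <= 1)%E.
Proof.
apply: (@le_trans _ _ (plan_cost c p (mu \x mut)%E)).
  by apply: ereal_inf_lbound; exists (mu \x mut)%E => //; exact: coupling_exists.
have [_ _ h3] := coupling_plan _ coupling_exists.
by rewrite -h3; exact: cost_le.
Qed.

Lemma Gc_fin : Gc \is a fin_num.
Proof.
by rewrite ge0_fin_numE ?Gc_ge0// (le_lt_trans Gc_le1)// ltry.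
Qed.

Lemma Fa_fin a : 0 <= a <= 1 -> Fa a \is a fin_num.
Proof.
move=> ha; rewrite ge0_fin_numE ?Fa_ge0//.
by rewrite (le_lt_trans (Fa_le_Gc a ha))// (le_lt_trans Gc_le1)// ltry.
Qed.

Lemma Fa_mono a b : 0 <= a -> a <= b -> (Fa a <= Fa b)%E.
Proof.
move=> a0 ab; have [b0|] := ltP 0 b; last first.
  by move=> b0; have -> : a = b by apply/eqP; rewrite eq_le ab (le_trans b0).
apply/ereal_infP => _ [pi hpi <-].
have [pi' [hpi' le']] := scale_plan a b pi a0 ab b0 hpi.
apply: le_trans le'; apply: ereal_inf_lbound; by exists pi'.
Qed.

End Aux.

Section Hahn.
Context (R : realType) (d : measure_display) (T : measurableType d)
  (c : T -> T -> R) (mu mut : probability T R) (p : R).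
Hypothesis hc : unit_diam_metric c.
Hypothesis mc : measurable_fun setT (fun z : (T * T)%type => c z.1 z.2).
Hypothesis p1 : 1 <= p.

Lemma fine_prob (P : probability T R) A : measurable A ->
  P A = (fine (P A))%:E /\ 0 <= fine (P A) <= 1.
Proof.
move=> mA; have hf : P A \is a fin_num by exact: fin_num_measure.
split; first by rewrite fineK.
rewrite -!lee_fin fineK// measure_ge0/=; exact: probability_le1.
Qed.

Let S := [set `|fine (mu A) - fine (mut A)| | A in measurable].

Lemma tv_ub : has_ubound S.
Proof.
exists 1 => _ [A mA <-].
have [_ /andP[a0 a1]] := fine_prob mu _ mA.
have [_ /andP[b0 b1]] := fine_prob mut _ mA.
rewrite ler_norml; apply/andP; split; lra.
Qed.

Lemma tv_le1 : tv_dist mu mut <= 1.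
Proof.
apply: ge_sup; first by exists `|fine (mu set0) - fine (mut set0)|, set0.
move=> _ [A mA <-].
have [_ /andP[a0 a1]] := fine_prob mu _ mA.
have [_ /andP[b0 b1]] := fine_prob mut _ mA.
rewrite ler_norml; apply/andP; split; lra.
Qed.

Lemma tv_ge A : measurable A -> `|fine (mu A) - fine (mut A)| <= tv_dist mu mut.
Proof. by move=> mA; apply: ub_le_sup; [exact: tv_ub | exists A]. Qed.

End Hahn.

Section diag_measure.
Local Open Scope ereal_scope.
Context (d : measure_display) (T : measurableType d) (R : realType).
Variable m : {measure set T -> \bar R}.

Lemma mdiag : measurable_fun setT (fun x : T => (x, x)).
Proof. exact: measurable_fun_pair. Qed.

Definition diagm (A : set (T * T)%type) := m ((fun x : T => (x, x)) @^-1` A).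

Let diagm0 : diagm set0 = 0.
Proof. by rewrite /diagm preimage_set0 measure0. Qed.

Let diagm_ge0 A : 0 <= diagm A.
Proof. exact: measure_ge0. Qed.

Let diagm_sigma_additive : semi_sigma_additive diagm.
Proof.
move=> F mF tF mUF; rewrite /diagm preimage_bigcup.
apply: measure_semi_sigma_additive.
- by move=> n; rewrite -[X in measurable X]setTI; exact: mdiag.
- apply/trivIsetP => /= i j _ _ ij; rewrite -preimage_setI.
  by move/trivIsetP : tF => /(_ _ _ _ _ ij) ->//; rewrite preimage_set0.
- by rewrite -preimage_bigcup -[X in measurable X]setTI; exact: mdiag.
Qed.

HB.instance Definition _ := isMeasure.Build _ _ _
  diagm diagm0 diagm_ge0 diagm_sigma_additive.

End diag_measure.

Section Hahn2.
Context (R : realType) (d : measure_display) (T : measurableType d)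
  (c : T -> T -> R) (mu mut : probability T R) (p : R).
Hypothesis hc : unit_diam_metric c.
Hypothesis mc : measurable_fun setT (fun z : (T * T)%type => c z.1 z.2).
Hypothesis p1 : 1 <= p.

Lemma EFinP' (Q : probability T R) A : measurable A -> Q A = (fine (Q A))%:E.
Proof. by move=> mA; rewrite fineK//; exact: fin_num_measure. Qed.

Lemma hahn_eps : exists eps, 0 <= eps <= tv_dist mu mut /\
  Fa R d T c mu mut p (1 - eps) = 0%E.
Proof.
pose nu := cadd (charge_of_finite_measure mu)
  (cscale (-1) (charge_of_finite_measure mut)).
have [P [N [[mP posP] [mN negN] PNT PN0]]] := Hahn_decomposition nu.
have nuE A : nu A = (mu A - mut A)%E.
  by rewrite /nu /cadd /=; congr (_ + _)%E; exact: mulN1e.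
have splitA (Q : probability T R) A : measurable A ->
    Q A = (Q (A `&` P) + Q (A `&` N))%E.
  move=> mA; rewrite -measureU; first by rewrite -setIUr PNT setIT.
  - exact: measurableI.
  - exact: measurableI.
  - by rewrite setIACA PN0 setI0.
have Pge A : measurable A -> (mut (A `&` P) <= mu (A `&` P))%E.
  move=> mA; have : (0 <= mu (A `&` P) - mut (A `&` P))%E.
    by rewrite -nuE; exact: (posP (A `&` P) (measurableI _ _ mA mP) (@subIsetr _ _ _)).
  by move=> h; rewrite -sube_ge0// (fin_num_measure mut _ (measurableI _ _ mA mP)).
have Nle A : measurable A -> (mu (A `&` N) <= mut (A `&` N))%E.
  move=> mA; have : (mu (A `&` N) - mut (A `&` N) <= 0)%E.
    by rewrite -nuE; exact: (negN (A `&` N) (measurableI _ _ mA mN) (@subIsetr _ _ _)).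
  by rewrite sube_le0.
pose m : {measure set T -> \bar R} := measure_add (mrestr mut mP) (mrestr mu mN).
have mE A : m A = (mut (A `&` P) + mu (A `&` N))%E by exact: measure_addE.
have m_mu A : measurable A -> (m A <= mu A)%E.
  by move=> mA; rewrite mE (splitA mu A mA); apply: leeD => //; exact: Pge.
have m_mut A : measurable A -> (m A <= mut A)%E.
  by move=> mA; rewrite mE (splitA mut A mA); apply: leeD => //; exact: Nle.
have hT := splitA mu setT measurableT.
rewrite probability_setT !setTI in hT.
rewrite (EFinP' mu P mP) (EFinP' mu N mN) in hT.
have PT := Pge setT measurableT; rewrite !setTI in PT.
rewrite (EFinP' mu P mP) (EFinP' mut P mP) lee_fin in PT.
have mT : m setT = (1 - (fine (mu P) - fine (mut P)))%:E.
  rewrite mE !setTI (EFinP' mu N mN) (EFinP' mut P mP) -EFinD; congr EFin.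
  move: hT; rewrite -EFinD => -[->]; lra.
exists (fine (mu P) - fine (mut P)); split.
  apply/andP; split; first by rewrite subr_ge0.
  exact: le_trans (ler_norm _) (tv_ge _ _ _ mu mut P mP).
apply/eqP; rewrite eq_le; apply/andP; split; last exact: Fa_ge0.
apply: (@le_trans _ _ (plan_cost c p (diagm _ _ _ m))).
  apply: ereal_inf_lbound; exists (diagm _ _ _ m) => //; split.
  - move=> A mA.
    change (m ((fun x : T => (x, x)) @^-1` (A `*` setT)) <= mu A)%E.
    have -> : (fun x : T => (x, x)) @^-1` (A `*` setT) = A.
      by apply/seteqP; split => x /=; [case|].
    exact: m_mu.
  - move=> B mB.
    change (m ((fun x : T => (x, x)) @^-1` (setT `*` B)) <= mut B)%E.
    have -> : (fun x : T => (x, x)) @^-1` (setT `*` B) = B.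
      by apply/seteqP; split => x /=; [case|].
    exact: m_mut.
  - change (m ((fun x : T => (x, x)) @^-1` setT) = (1 - (fine (mu P) - fine (mut P)))%:E).
    by rewrite preimage_setT mT.
have mg : measurable_fun setT (fun z : (T * T)%type => ((c z.1 z.2) `^ p)%:E).
  apply/measurable_EFinP.
  exact: (measurableT_comp (measurable_powR p) mc).
rewrite /plan_cost.
change (\int[pushforward m (fun x : T => (x, x))]_(z in setT)
   ((c z.1 z.2) `^ p)%:E <= 0)%E.
rewrite (ge0_integral_pushforward (mdiag _ T)) //; last first.
  by move=> z _; rewrite lee_fin powR_ge0.
rewrite integral0_eq // => x _ /=.
case: hc => _ h0 _ _ _.
rewrite (proj2 (h0 x x) erefl) powR0 //.
by rewrite gt_eqF // (lt_le_trans ltr01 p1).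
Qed.

End Hahn2.

Section Main.
Context (R : realType) (d : measure_display) (T : measurableType d)
  (c : T -> T -> R) (mu mut : probability T R) (p : R).
Hypothesis hc : unit_diam_metric c.
Hypothesis mc : measurable_fun setT (fun z : (T * T)%type => c z.1 z.2).
Hypothesis p1 : 1 <= p.

Let p0 : 0 <= p^-1.
Proof. by rewrite invr_ge0 (le_trans _ p1). Qed.

Lemma WpaE a : Wpa c p a mu mut = fine (Fa R d T c mu mut p a) `^ p^-1.
Proof. by []. Qed.

Lemma WpE : Wp c p mu mut = fine (Gc R d T c mu mut p) `^ p^-1.
Proof. by []. Qed.

Lemma Wpa_mono a b : 0 <= a -> a <= b -> b <= 1 ->
  Wpa c p a mu mut <= Wpa c p b mu mut.
Proof.
move=> a0 ab b1; rewrite !WpaE; apply: ge0_ler_powR => //.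
- by rewrite nnegrE fine_ge0// Fa_ge0.
- by rewrite nnegrE fine_ge0// Fa_ge0.
have fa := Fa_fin _ _ _ c mu mut p hc mc p1 a.
have fb := Fa_fin _ _ _ c mu mut p hc mc p1 b.
apply: fine_le.
- by apply: fa; rewrite a0 (le_trans ab b1).
- by apply: fb; rewrite (le_trans a0 ab) b1.
- exact: (Fa_mono _ _ _ _ _ _ _ mc).
Qed.

Lemma Wpa_le_W a : 0 <= a <= 1 -> Wpa c p a mu mut <= Wp c p mu mut.
Proof.
move=> ha; rewrite WpaE WpE; apply: ge0_ler_powR => //.
- by rewrite nnegrE fine_ge0// Fa_ge0.
- by rewrite nnegrE fine_ge0// Gc_ge0.
- apply: fine_le.
  + exact: Fa_fin.
  + exact: Gc_fin.
  + exact: (Fa_le_Gc _ _ _ _ _ _ _ mc).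
Qed.

Lemma W_ge0 : 0 <= Wp c p mu mut.
Proof. exact: powR_ge0. Qed.


Lemma main_ineq delta k : 0 < delta -> tv_dist mu mut = delta ->
  Wpa c p (1 - delta / 10) mu mut >= Wp c p mu mut / 2 -> 0 < k ->
  Num.min delta (Wp c p mu mut / k) <= (10%N)%:R * RPW c p k mu mut /\
  RPW c p k mu mut <= (10%N)%:R * Num.min delta (Wp c p mu mut / k).
Proof.
move=> d0 htv hW k0.
set W := Wp c p mu mut.
have W0 : 0 <= W := W_ge0.
have d1 : delta <= 1 by rewrite -htv; exact: tv_le1.
set S := [set eps : R | 0 <= eps <= 1 /\ Wpa c p (1 - eps) mu mut <= k * eps].
have -> : RPW c p k mu mut = inf S by [].
have [e0 [/andP[e00 e0d] He0]] := hahn_eps _ _ _ c mu mut p hc mc p1.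
rewrite htv in e0d.
have e0S : S e0.
  split; first by rewrite e00 (le_trans e0d d1).
  rewrite WpaE He0 /= powR0 ?mulr_ge0 ?(ltW k0)//.
  by rewrite invr_eq0 gt_eqF // (lt_le_trans ltr01 p1).
have hlb : has_lbound S by exists 0 => x [/andP[]].
have S0 : S !=set0 by exists e0.
have mn0 : 0 <= Num.min delta (W / k).
  by rewrite le_min (ltW d0) divr_ge0// ltW.
split.
  suff : Num.min delta (W / k) / 10 <= inf S.
    move=> h; have := h; rewrite ler_pdivrMr; last by [].
    by rewrite [_ * 10]mulrC.
  apply: lb_le_inf => // eps [/andP[eps0 eps1] hk].
  have [h|h] := leP (delta / 10) eps.
    apply: le_trans h; rewrite ler_pM2r //.
    by rewrite ge_min lexx.
  have hle : Wpa c p (1 - delta / 10) mu mut <= Wpa c p (1 - eps) mu mut.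
    apply: Wpa_mono; [lra|lra|lra].
  have hW1 : W / 2 <= k * eps := le_trans hW (le_trans hle hk).
  have hW2 : W <= 2 * (k * eps).
    by rewrite -ler_pdivrMl// mulrC.
  have : W / k <= 2 * eps.
    rewrite ler_pdivrMr //; apply: (le_trans hW2); rewrite le_eqVlt; apply/orP; left.
    by rewrite mulrCA mulrC.
  move=> hWk; have : Num.min delta (W / k) <= 2 * eps.
    by rewrite ge_min hWk orbT.
  lra.
have hI : inf S <= Num.min delta (W / k).
  have [h|h] := leP delta (W / k).
    apply: (le_trans (ge_inf hlb e0S)); apply: (le_trans e0d).
    by rewrite ?lexx ?le_min ?lexx ?h.
  have hS : S (W / k).
  split.
    by rewrite divr_ge0 ?(ltW k0)//= (le_trans (ltW h) d1).
  rewrite [k * _]mulrC divfK ?gt_eqF//; apply: Wpa_le_W.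
  apply/andP; split; last by rewrite lerBlDr lerDl divr_ge0// ltW.
  by rewrite subr_ge0 (le_trans (ltW h) d1).
  apply: (le_trans (ge_inf hlb hS)).
  by rewrite ?lexx ?le_min ?lexx ?(ltW h).
lra.
Qed.

End Main.

Theorem lemma3p2 :
  exists C : nat, (0 < C)%N /\
  forall (R : realType) (d : measure_display) (T : measurableType d)
    (c : T -> T -> R) (mu mut : probability T R) (delta p k : R),
    unit_diam_metric c ->
    measurable_fun setT (fun z : (T * T)%type => c z.1 z.2) ->
    0 < delta ->
    tv_dist mu mut = delta ->
    Wpa c p (1 - delta / 10) mu mut >= Wp c p mu mut / 2 ->
    1 <= p -> 0 < k ->
    Num.min delta (Wp c p mu mut / k) <= C%:R * RPW c p k mu mut /\
    RPW c p k mu mut <= C%:R * Num.min delta (Wp c p mu mut / k).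
Proof.
exists 10%N; split => // R d T c mu mut delta p k hc mc d0 htv hW p1 k0.
exact: main_ineq.
Qed.
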